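(* Let $0<\varepsilon<1/4$ and $r=(10/\varepsilon^2)\log(1/\varepsilon)$. Let $G$ be a bipartite graph with at least one edge, and let $H$ be a balanced bipartite subgraph of $G$ with parts $A,B$, $|A|=|B|=m$, that maximizes $\Phi(F)=d_F^{\,r}\,v(F)$ over all balanced bipartite subgraphs $F$ of $G$. Assume $\varepsilon m$ is a positive integer. Let $A_1\subseteq A$, $B_1\subseteq B$ with $|A_1|=|B_1|=\varepsilon m$, and put $A_2=A\setminus A_1$, $B_2=B\setminus B_1$. Then $$d(A_2,B_2)< d_H\,(1+\varepsilon^3/3).$$
   Context: $\log$ is the natural logarithm; $v(F)$ is the number of vertices of $F$. A bipartite graph is balanced if its two parts have equal size. For disjoint vertex sets $X,Y$, $d(X,Y)=e(X,Y)/(|X|\,|Y|)$ (number of edges between $X$ and $Y$ divided by $|X||Y|$); the density $d_F$ of a bipartite graph $F$ is this quantity for its two parts. *)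

(* Defs.v *)
From HB Require Import structures.
From mathcomp Require Import all_boot all_order all_algebra.
From mathcomp Require Import all_classical all_reals.
From mathcomp Require Import exp.
Set Implicit Arguments. Unset Strict Implicit. Unset Printing Implicit Defensive.
Import Order.TTheory GRing.Theory Num.Theory.
Local Open Scope ring_scope.

Definition simple_graph (V : finType) (g : rel V) : Prop :=
  (forall x y, g x y = g y x) /\ (forall x, ~~ g x x).

Definition bipartite_graph (V : finType) (g : rel V) : Prop :=
  exists S : {set V}, forall x y, g x y -> (x \in S) != (y \in S).

Definition eXY (V : finType) (f : rel V) (X Y : {set V}) : nat :=
  #|[set p in finset.setX X Y | f p.1 p.2]|.

Definition dens (R : realType) (V : finType) (f : rel V) (X Y : {set V}) : R :=
  (eXY f X Y)%:R / (#|X| * #|Y|)%:R.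

Definition balanced_bip_sub (V : finType) (g : rel V) (X Y : {set V}) (f : rel V)
  : Prop :=
  [/\ [disjoint X & Y], #|X| = #|Y|,
      (forall x y, f x y = f y x),
      (forall x y, f x y -> g x y) &
      (forall x y, f x y -> (x \in X /\ y \in Y) \/ (x \in Y /\ y \in X))].

Definition Phi (R : realType) (V : finType) (r : R) (X Y : {set V}) (f : rel V) : R :=
  powR (dens R f X Y) r * (#|X| + #|Y|)%:R.

(* Main.v *)
Require Import Defs.
From HB Require Import structures.
From mathcomp Require Import all_boot all_order all_algebra.
From mathcomp Require Import all_classical all_reals.
From mathcomp Require Import exp.
From mathcomp Require Import ring lra.
Import Order.TTheory GRing.Theory Num.Theory.
Local Open Scope ring_scope.

Lemma ln_le_sub1 {R : realType} {y : R} : 0 < y -> ln y <= y - 1.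
Proof.
move=> y0; have := expR_ge1Dx (ln y); rewrite lnK ?posrE //; lra.
Qed.

Theorem lemma3p4 (R : realType) (V : finType) (g : rel V) (eps : R)
    (A B : {set V}) (h : rel V) (A1 B1 : {set V}) (k : nat) :
  0 < eps -> eps < 1 / 4 ->
  simple_graph g -> bipartite_graph g -> (exists x y, g x y) ->
  balanced_bip_sub g A B h ->
  (forall (X Y : {set V}) (f : rel V), balanced_bip_sub g X Y f ->
     Phi (10 / eps ^+ 2 * ln (1 / eps)) X Y f
     <= Phi (10 / eps ^+ 2 * ln (1 / eps)) A B h) ->
  eps * (#|A|)%:R = k%:R -> (0 < k)%N ->
  A1 \subset A -> B1 \subset B -> #|A1| = k -> #|B1| = k ->
  dens R h (A :\: A1) (B :\: B1) < dens R h A B * (1 + eps ^+ 3 / 3).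
Proof.
move=> e0 e14 [gsym girr] _ [x [y gxy]] HH Hmax ek k0 A1A B1B cA1 cB1.
have HH' := HH; case: HH' => dAB cAB hsym hg hAB.
set r := 10 / eps ^+ 2 * ln (1 / eps) in Hmax.
have L1 : 1 - eps <= ln (1 / eps).
  rewrite div1r lnV ?posrE //; have := ln_le_sub1 e0; lra.
have r0 : 0 < r.
  rewrite /r; apply: mulr_gt0; last lra.
  by apply: divr_gt0 => //; apply: exprn_gt0.
set d := dens R h A B.
have d0 : 0 <= d by rewrite /d /dens divr_ge0.
have PhiH : 0 < Phi r A B h.
  pose f1 := fun a b : V => ((a == x) && (b == y)) || ((a == y) && (b == x)).
  have xy : x != y by apply/eqP => exy; move: (girr x); rewrite {2}exy gxy.
  have Hb : balanced_bip_sub g [set x] [set y] f1.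
    split.
    - by rewrite disjoints1 inE.
    - by rewrite !cards1.
    - by move=> a b; rewrite /f1 orbC; congr orb; rewrite andbC.
    - move=> a b; rewrite /f1 => /orP[/andP[/eqP-> /eqP->]|/andP[/eqP-> /eqP->]] //.
      by rewrite gsym.
    - move=> a b; rewrite /f1 !inE => /orP[/andP[-> ->]|/andP[-> ->]]; by [left|right].
  apply: lt_le_trans (Hmax _ _ _ Hb).
  rewrite /Phi; apply: mulr_gt0; last by rewrite ltr0n addn_gt0 cards1.
  apply: powR_gt0; rewrite /dens; apply: divr_gt0; last by rewrite ltr0n !cards1.
  rewrite ltr0n /eXY; apply/card_gt0P; exists (x, y).
  by rewrite !inE /= /f1 !eqxx.
have dpos : 0 < d.
  rewrite lt_def d0 andbT; apply/negP => /eqP dz.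
  move: PhiH; rewrite /Phi -/d dz powR0 ?mul0r ?ltxx //; lra.
set m := #|A|.
have m0 : 0 < m%:R :> R.
  rewrite ltr0n lt0n; apply/negP => /eqP mz.
  move: ek; rewrite -/m mz mulr0n mulr0 => /eqP; rewrite eq_sym pnatr_eq0 => /eqP kz.
  by rewrite kz in k0.
have km : (k <= m)%N.
  rewrite -(ler_nat R) -ek; have := m0; nra.
set A2 := A :\: A1; set B2 := B :\: B1.
have cA2 : #|A2| = (m - k)%N by rewrite /A2 cardsDS // cA1.
have cB2 : #|B2| = (m - k)%N by rewrite /B2 cardsDS // cB1 -cAB.
have nE : (m - k)%:R = (1 - eps) * m%:R :> R.
  by rewrite GRing.natrB // -ek; ring.
pose f2 := fun a b : V => h a b &&
  (((a \in A2) && (b \in B2)) || ((a \in B2) && (b \in A2))).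
have Hb2 : balanced_bip_sub g A2 B2 f2.
  split.
  - by apply: (disjointWl (subsetDl A A1)); apply: (disjointWr (subsetDl B B1)).
  - by rewrite cA2 cB2.
  - by move=> a b; rewrite /f2 hsym orbC; congr (_ && (_ || _)); rewrite andbC.
  - by move=> a b /andP[/hg].
  - move=> a b /andP[_ /orP[/andP[-> ->]|/andP[-> ->]]]; by [left|right].
have eE : eXY f2 A2 B2 = eXY h A2 B2.
  rewrite /eXY; apply: eq_card => -[a b]; rewrite !finset.in_set /= /f2.
  rewrite /A2 /B2 !inE; by case: (a \in A1); case: (a \in A); case: (b \in B1); case: (b \in B); rewrite /= ?andbT ?andbF.
have Hm2 := Hmax _ _ _ Hb2.
rewrite /Phi /dens eE -/(dens R h A2 B2) -/(dens R h A B) -/d cA2 cB2 -cAB -/m in Hm2.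
set d2 := dens R h A2 B2 in Hm2 *.
have d20 : 0 <= d2 by rewrite /d2 /dens divr_ge0.
set q := 1 + eps ^+ 3 / 3.
have q0 : 0 < q by rewrite /q; have := exprn_gt0 3 e0; lra.
rewrite ltNge; apply/negP => Hge.
have P1 : powR d r * powR q r <= powR d2 r.
  rewrite -powRM; [|lra|lra].
  apply: ge0_ler_powR => //; try lra; rewrite nnegrE //; apply: mulr_ge0; lra.
have Eq : powR q r = sequences.expR (r * ln q).
  by rewrite /powR (negbTE (lt0r_neq0 q0)).
rewrite Eq in P1.
set E := sequences.expR (r * ln q) in P1.
have Pp : 0 < powR d r by apply: powR_gt0.
rewrite !natrD nE in Hm2.
have H3 : powR d r * E * ((1 - eps) * m%:R + (1 - eps) * m%:R) <= powR d r * (m%:R + m%:R).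
  apply: le_trans Hm2; apply: ler_wpM2r => //; have := m0; nra.
rewrite -mulrA ler_pM2l // in H3.
have H4 : E * (1 - eps) <= 1 by nra.
have H5 : (1 + r * ln q) * (1 - eps) <= 1.
  apply: le_trans H4; apply: ler_wpM2r; first lra.
  exact: expR_ge1Dx.
have lq : eps ^+ 3 / (3 + eps ^+ 3) <= ln q.
  have : ln q^-1 <= q^-1 - 1 by apply: ln_le_sub1; rewrite invr_gt0.
  rewrite lnV ?posrE //.
  have -> : eps ^+ 3 / (3 + eps ^+ 3) = 1 - q^-1.
    rewrite /q; field.
    by apply/lt0r_neq0; have := exprn_gt0 3 e0; lra.
  lra.
set t := 10 * eps * (1 - eps) / (3 + eps ^+ 3).
have e3 : 0 < eps ^+ 3 by apply: exprn_gt0.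
have tE : t * (3 + eps ^+ 3) = 10 * eps * (1 - eps).
  by rewrite /t mulfVK //; apply/lt0r_neq0; lra.
have rt : t <= r * ln q.
  have -> : t = (10 / eps ^+ 2 * (1 - eps)) * (eps ^+ 3 / (3 + eps ^+ 3)).
    rewrite /t; field.
    by apply/andP; split; apply/lt0r_neq0; lra.
  apply: ler_pM => //.
  - apply: mulr_ge0; [apply: divr_ge0; [lra|apply: exprn_ge0; lra] | lra].
  - apply: divr_ge0; [apply: exprn_ge0; lra | lra].
  - rewrite /r; apply: ler_wpM2l => //; apply: divr_ge0; [lra|apply: exprn_ge0; lra].
have H6 : (1 + t) * (1 - eps) <= 1.
  apply: le_trans H5; apply: ler_wpM2r; lra.
have H7 : t * (1 - eps) <= eps by lra.
have H8 : t * (1 - eps) * (3 + eps ^+ 3) <= eps * (3 + eps ^+ 3).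
  by apply: ler_wpM2r => //; lra.
have : 10 * eps * (1 - eps) * (1 - eps) <= eps * (3 + eps ^+ 3).
  by move: H8; rewrite -tE; have -> : t * (3 + eps ^+ 3) * (1 - eps) = t * (1 - eps) * (3 + eps ^+ 3) by ring.
have e3b : eps ^+ 3 <= 1 by rewrite exprn_ile1 //; lra.
nra.
Qed.
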